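(* For a finite group $G$, the following conditions are equivalent: (a) $P(G)$ is a threshold graph; (b) $P(G)$ is a split graph; (c) $P(G)$ contains no induced subgraph isomorphic to $2K_2$; (d) $G$ satisfies the intersection condition, i.e. $G$ does not contain subgroups $H$ and $K$ such that both $H\setminus K$ and $K\setminus H$ contain elements of order greater than $2$; (e) $G$ is one of: a cyclic group of prime power order (including the trivial group); an elementary abelian $2$-group; a dihedral $2$-group; a cyclic group of order $2p$; a dihedral group of order $2p^n$ ($n\ge1$); or a dihedral group of order $4p$; where $p$ is an odd prime.
   Context: The power graph $P(G)$ has vertex set $G$, with distinct $u,v$ adjacent if and only if $u=v^i$ or $v=u^j$ for some integers $i,j$. A threshold graph is a graph with no induced subgraph isomorphic to $P_4$ (path on four vertices), $C_4$ ($4$-cycle) or $2K_2$ (two disjoint edges with no other edges between them). A split graph is a graph whose vertex set is a disjoint union of a set inducing a complete graph and a set inducing a graph with no edges. The dihedral group of order $2m$ is $\langle a,b: a^m=b^2=(ab)^2=1\rangle$. *)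

(* Defs.v *)
From mathcomp Require Import all_boot all_fingroup all_solvable.
Set Implicit Arguments.
Unset Strict Implicit.
Unset Printing Implicit Defensive.
Local Open Scope group_scope.

Section PowerGraph.
Variable gT : finGroupType.

(* Power graph P(G): distinct u, v adjacent iff u = v^i or v = u^j for some
   integers i, j; in a finite group this means u \in <[v]> or v \in <[u]>. *)
Definition pg_adj (u v : gT) : bool :=
  (u != v) && ((u \in <[v]>) || (v \in <[u]>)).

Definition has_induced_P4 (G : {set gT}) : Prop :=
  exists a b c d : gT,
    [/\ [&& a \in G, b \in G, c \in G & d \in G], uniq [:: a; b; c; d],
        [&& pg_adj a b, pg_adj b c & pg_adj c d] &
        [&& ~~ pg_adj a c, ~~ pg_adj b d & ~~ pg_adj a d]].

Definition has_induced_C4 (G : {set gT}) : Prop :=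
  exists a b c d : gT,
    [/\ [&& a \in G, b \in G, c \in G & d \in G], uniq [:: a; b; c; d],
        [&& pg_adj a b, pg_adj b c, pg_adj c d & pg_adj d a] &
        ~~ pg_adj a c && ~~ pg_adj b d].

Definition has_induced_2K2 (G : {set gT}) : Prop :=
  exists a b c d : gT,
    [/\ [&& a \in G, b \in G, c \in G & d \in G], uniq [:: a; b; c; d],
        pg_adj a b && pg_adj c d &
        [&& ~~ pg_adj a c, ~~ pg_adj a d, ~~ pg_adj b c & ~~ pg_adj b d]].

Definition pg_threshold (G : {set gT}) : Prop :=
  ~ has_induced_P4 G /\ ~ has_induced_C4 G /\ ~ has_induced_2K2 G.

Definition pg_clique (S : {set gT}) : Prop :=
  forall u v, u \in S -> v \in S -> u != v -> pg_adj u v.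

Definition pg_independent (S : {set gT}) : Prop :=
  forall u v, u \in S -> v \in S -> ~~ pg_adj u v.

Definition pg_split (G : {set gT}) : Prop :=
  exists S : {set gT}, [/\ S \subset G, pg_clique S & pg_independent (G :\: S)].

Definition intersection_condition (G : {group gT}) : Prop :=
  ~ exists H K : {group gT},
      [/\ H \subset G, K \subset G,
          (exists2 x, x \in H :\: K & 2 < #[x]) &
          (exists2 y, y \in K :\: H & 2 < #[y])].

Definition dihedral_2m (G : {group gT}) (m : nat) : Prop :=
  0 < m /\ G \isog Grp (a : b : (a ^+ m, b ^+ 2, (a * b) ^+ 2)).

Definition power_graph_class (G : {group gT}) : Prop :=
  (cyclic G /\ exists p e, prime p /\ #|G| = (p ^ e)%N)
  \/ 2.-abelem G
  \/ (exists k, dihedral_2m G (2 ^ k))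
  \/ (exists p, [/\ prime p, odd p &
        [\/ cyclic G /\ #|G| = (2 * p)%N,
            exists2 n, 0 < n & dihedral_2m G (p ^ n) |
            dihedral_2m G (2 * p)]]).

End PowerGraph.

(* Main.v *)
Require Import Defs.
From mathcomp Require Import all_boot all_fingroup all_solvable.
From mathcomp Require Import zify.
Set Implicit Arguments.
Unset Strict Implicit.
Unset Printing Implicit Defensive.

Definition goodn n := (exists p e, prime p /\ n = p ^ e) \/
  (exists p, [/\ prime p, odd p & n = 2 * p]).
Definition dchain n := forall d e, d %| n -> e %| n -> 2 < d -> 2 < e ->
  (d %| e) || (e %| d).

Lemma two_p_div p d : prime p -> d %| 2 * p -> 2 < d -> d = p \/ d = 2 * p.
Proof.
move=> pp dd d2.
have pd : p %| d.
  apply: contraTT d2 => npd; rewrite -leqNgt.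
  have cdp : coprime d p.
    by rewrite coprime_sym prime_coprime.
  by move: dd; rewrite Gauss_dvdl // => /(dvdn_leq (isT : 0 < 2)).
have p0 := prime_gt0 pp.
have : d %/ p * p %| 2 * p by rewrite divnK.
rewrite dvdn_pmul2r // => q2.
have [q1|q1] := eqVneq (d %/ p) 1.
  by left; rewrite -(divnK pd) q1 mul1n.
by right; rewrite -(divnK pd) (prime_nt_dvdP (isT : prime 2) q1 q2) mulnC.
Qed.

Lemma good_dchain n : goodn n -> dchain n.
Proof.
case=> [[p [e [pp ->]]] | [p [pp po ->]]] d f dn fn d2 f2.
  have /(dvdn_pfactor _ _ pp) [i _ ->] := dn.
  have /(dvdn_pfactor _ _ pp) [j _ ->] := fn.
  case: (leqP i j) => h; first by rewrite dvdn_exp2l.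
  by rewrite orbC dvdn_exp2l // ltnW.
case: (two_p_div pp dn d2) => ->; case: (two_p_div pp fn f2) => ->;
  by rewrite ?dvdnn ?dvdn_mull ?orbT.
Qed.

Lemma dchain_good n : 0 < n -> dchain n -> goodn n.
Proof.
elim/ltn_ind: n => n IH n0 ch.
have [n1 | n1] := leqP n 1.
  by left; exists 2, 0; split => //; lia.
set p := pdiv n.
have pp : prime p by apply: pdiv_prime.
have pn : p %| n by apply: pdiv_dvd.
have p1 := prime_gt1 pp.
set m := n %/ p.
have nE : n = m * p by rewrite divnK.
have m0 : 0 < m by move: n0; rewrite nE; case: (m) => //.
have ltm : m < n by rewrite /m ltn_Pdiv.
have chm : dchain m.
  move=> d e dm em; apply: ch; rewrite nE; exact: dvdn_mulr.
have pmin : forall q, 1 < q -> q %| n -> p <= q by move=> q q1 qn; apply: pdiv_min_dvd.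
case: (IH m ltm m0 chm) => [[q [e [qp mE]]] | [q [qp qo mE]]].
- have [qp' | nqp] := eqVneq q p.
    by left; exists p, e.+1; split => //; rewrite nE mE qp' expnSr.
  case: e mE => [|[|e]] mE.
  + by left; exists p, 1; split => //; rewrite nE mE expn0 mul1n expn1.
  + have qn : q %| n by rewrite nE mE expn1 dvdn_mulr.
    have pq : p <= q by apply: pmin; rewrite ?prime_gt1.
    have pq' : p < q by rewrite ltn_neqAle eq_sym nqp pq.
    have [p2|p2] := eqVneq p 2.
      right; exists q; split => //.
        by apply: contraT => /(prime_oddPn qp) q2; move: pq'; rewrite q2 p2.
      by rewrite nE mE expn1 p2 mulnC.
    have p3 : 2 < p by rewrite ltn_neqAle eq_sym p2 prime_gt1.
    case/orP: (ch p q pn qn p3 (leq_trans p3 pq)) => h.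
      by move: h; rewrite dvdn_prime2 // => /eqP E; rewrite E eqxx in nqp.
    by move: (dvdn_leq (prime_gt0 pp) h); rewrite leqNgt pq'.
  + exfalso.
    have qn : q %| n by rewrite nE mE expnS -mulnA dvdn_mulr.
    have pq : p <= q by apply: pmin; rewrite ?prime_gt1.
    have pq' : p < q by rewrite ltn_neqAle eq_sym nqp pq.
    have q1 := prime_gt1 qp.
    have [p2|p2] := eqVneq p 2; last first.
      have p3 : 2 < p by rewrite ltn_neqAle eq_sym p2 prime_gt1.
      case/orP: (ch p q pn qn p3 (leq_trans p3 pq)) => h.
        by move: h; rewrite dvdn_prime2 // => /eqP E; rewrite E eqxx in nqp.
      by move: (dvdn_leq (prime_gt0 pp) h); rewrite leqNgt pq'.
    have q3 : 2 < q by rewrite -p2.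
    have h1 : q ^ 2 %| n by rewrite nE mE dvdn_mulr // dvdn_exp2l.
    have h2 : 2 * q %| n.
      by rewrite nE mE p2 [_ * 2]mulnC dvdn_pmul2l // dvdn_exp // dvdnn.
    have := ch _ _ h1 h2 _ _.
    have A : ~~ (q ^ 2 %| 2 * q).
      rewrite expnS expn1 mulnC dvdn_pmul2l ?prime_gt0 //.
      by apply/negP => /(dvdn_leq (isT : 0 < 2)); rewrite leqNgt q3.
    have B : ~~ (2 * q %| q ^ 2).
      rewrite expnS expn1 dvdn_pmul2r ?prime_gt0 //.
      rewrite dvdn_prime2 //; apply/negP => /eqP q2; move: q3; rewrite -q2.
      done.
    rewrite (negPf A) (negPf B) /=.
    have C : 2 < q ^ 2 by apply: (leq_trans q3); rewrite expnS expn1 leq_pmull ?prime_gt0.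
    have D : 2 < 2 * q by apply: (leq_trans q3); rewrite leq_pmull.
    by move=> /(_ C D).
- exfalso.
  have q1 := prime_gt1 qp.
  have q2 : q != 2 by apply/eqP => q2; move: qo; rewrite q2.
  have q3 : 2 < q by rewrite ltn_neqAle eq_sym q2 q1.
  have tn : 2 %| n by rewrite nE mE -mulnA dvdn_mulr.
  have p2 : p = 2 by apply/eqP; rewrite eqn_leq pmin // prime_gt1.
  have h1 : 4 %| n by rewrite nE mE p2 mulnC mulnA dvdn_mulr.
  have h2 : q %| n by rewrite nE mE dvdn_mulr // dvdn_mull.
  have := ch _ _ h1 h2 isT q3.
  have A : ~~ (4 %| q).
    by apply/negP => /(dvdn_trans (isT : 2 %| 4)); rewrite dvdn2 qo.
  have B : ~~ (q %| 4).
    apply/negP => /(dvdn_pfactor _ 2 (isT : prime 2)) [k k2 qE].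
    by move: qo q2 q1; rewrite qE; case: k k2 qE => [|[|[|]]].
  by rewrite (negPf A) (negPf B).
Qed.
Section Part1.
Variable gT : finGroupType.
Local Open Scope group_scope.
Implicit Types (x y u v a b c d : gT).

Definition chainc (G : {set gT}) := forall x y, x \in G -> y \in G ->
  2 < #[x] -> 2 < #[y] -> (x \in <[y]>) || (y \in <[x]>).

Lemma pg_adjC u v : pg_adj u v = pg_adj v u.
Proof. by rewrite /pg_adj eq_sym orbC. Qed.

Lemma adj1 v : v != 1 -> pg_adj 1 v.
Proof. by move=> nv; rewrite /pg_adj eq_sym nv group1. Qed.

Lemma ord_gt2 x : x != 1 -> #[x] != 2 -> 2 < #[x].
Proof.
move=> n1 n2; rewrite ltn_neqAle eq_sym n2 /=.
by rewrite ltn_neqAle eq_sym order_eq1 n1 order_gt0.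
Qed.

Lemma ord_gt2_neq x : 2 < #[x] -> x != 1 /\ #[x] != 2.
Proof.
move=> h; split; last by rewrite neq_ltn h orbT.
by apply/eqP=> e; move: h; rewrite e order1.
Qed.

Lemma invol_indep u v : #[u] = 2 -> #[v] = 2 -> ~~ pg_adj u v.
Proof.
move=> ou ov; rewrite /pg_adj (cycle2g ou) (cycle2g ov) !inE.
have nu : u != 1 by rewrite -order_eq1 ou.
have nv : v != 1 by rewrite -order_eq1 ov.
by rewrite (negPf nu) (negPf nv) /= (eq_sym v u) orbb andNb.
Qed.

Lemma adj_invol a b : #[a] = 2 -> pg_adj a b -> b = 1 \/ a \in <[b]>.
Proof.
move=> oa /andP[nab /orP[-> | ]]; first by right.
by rewrite (cycle2g oa) !inE => /orP[/eqP->|/eqP e]; [left | rewrite e eqxx in nab].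
Qed.

Section G.
Variable G : {group gT}.

Lemma IC_chain : intersection_condition G <-> chainc G.
Proof.
split.
  move=> IC x y Gx Gy ox oy.
  case: (boolP ((x \in <[y]>) || (y \in <[x]>))) => // /norP[nx ny]; exfalso.
  apply: IC; exists <[x]>%G, <[y]>%G; split; rewrite ?cycle_subG //.
    by exists x; rewrite // inE nx cycle_id.
  by exists y; rewrite // inE ny cycle_id.
move=> ch [H [K [sH sK [x /setDP[Hx nKx] ox] [y /setDP[Ky nHy] oy]]]].
have := ch x y (subsetP sH x Hx) (subsetP sK y Ky) ox oy.
case/orP=> [xy | yx].
  by case/negP: nKx; apply: (subsetP _ _ xy); rewrite cycle_subG.
by case/negP: nHy; apply: (subsetP _ _ yx); rewrite cycle_subG.
Qed.

Lemma no2K2_chain : ~ has_induced_2K2 G -> chainc G.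
Proof.
move=> no x y Gx Gy ox oy.
case: (boolP ((x \in <[y]>) || (y \in <[x]>))) => // /norP[nx ny]; exfalso.
have [x1 x2] := ord_gt2_neq ox; have [y1 y2] := ord_gt2_neq oy.
have xV : x != x^-1.
  apply/eqP=> e; have : x ^+ 2 = 1 by rewrite expgS expg1 {1}e mulVg.
  by move/eqP; rewrite -order_dvdn => /(dvdn_leq (isT : 0 < 2)); rewrite leqNgt ox.
have yV : y != y^-1.
  apply/eqP=> e; have : y ^+ 2 = 1 by rewrite expgS expg1 {1}e mulVg.
  by move/eqP; rewrite -order_dvdn => /(dvdn_leq (isT : 0 < 2)); rewrite leqNgt oy.
apply: no; exists x, x^-1, y, y^-1; split.
- by rewrite !groupV Gx Gy.
- have h1 : x != y by apply/eqP=> e; case/negP: nx; rewrite e cycle_id.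
  have h2 : x != y^-1 by apply/eqP=> e; case/negP: nx; rewrite e groupV cycle_id.
  have h3 : x^-1 != y by apply/eqP=> e; case/negP: ny; rewrite -e groupV cycle_id.
  have h4 : x^-1 != y^-1 by rewrite (inj_eq invg_inj).
  by rewrite /= !inE !negb_or xV yV h1 h2 h3 h4.
- by rewrite /pg_adj xV yV !groupV !cycle_id !orbT.
- by rewrite /pg_adj !cycleV ![_^-1 \in _]groupV (negPf nx) (negPf ny) !andbF.
Qed.

Lemma chain_clique u v : chainc G -> u \in G -> v \in G -> u != v ->
  #[u] != 2 -> #[v] != 2 -> pg_adj u v.
Proof.
move=> ch Gu Gv nuv ou ov.
have [e | u1] := eqVneq u 1; first by move: nuv; rewrite e eq_sym => /adj1.
have [e | v1] := eqVneq v 1; first by move: nuv; rewrite e pg_adjC => /adj1.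
by rewrite /pg_adj nuv ch // ord_gt2.
Qed.

Lemma chain_split : chainc G -> pg_split G.
Proof.
move=> ch; exists [set z in G | #[z] != 2]; split.
- by apply/subsetP=> z; rewrite inE => /andP[].
- move=> u v; rewrite !inE => /andP[Gu ou] /andP[Gv ov] nuv.
  exact: chain_clique.
- have h : forall z, z \in G :\: [set z in G | #[z] != 2] -> #[z] = 2.
    by move=> z; rewrite !inE => /andP[]; case: (z \in G) => //= /negPn /eqP.
  by move=> u v /h ou /h ov; apply: invol_indep.
Qed.

Lemma split_no2K2 : pg_split G -> ~ has_induced_2K2 G.
Proof.
move=> [S [sSG cl ind]] [a [b [c [d [Gs un /andP[ab cd] nons]]]]].
move: Gs => /and4P[Ga Gb Gc Gd].
move: un; rewrite /= !inE !negb_or => /and4P[/and3P[nab nac nad] /andP[nbc nbd] ncd _].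
move: nons => /and4P[nac' nad' nbc' nbd'].
have hS : forall u w, u \in G -> w \in G -> pg_adj u w -> (u \in S) || (w \in S).
  move=> u w Gu Gw uw; apply/norP=> [[nu nw]].
  by move: (ind u w); rewrite !inE nu nw Gu Gw uw => /(_ isT isT).
have := hS a b Ga Gb ab; have := hS c d Gc Gd cd.
case/orP=> [cS|dS] /orP[aS|bS].
- by move: nac'; rewrite cl.
- by move: nbc'; rewrite cl // eq_sym.
- by move: nad'; rewrite cl.
- by move: nbd'; rewrite cl.
Qed.

Lemma chain_threshold : chainc G -> pg_threshold G.
Proof.
move=> ch.
have cl := chain_clique ch.
split; last split; last by apply: split_no2K2; apply: chain_split.
- move=> [a [b [c [d [Gs un /and3P[ab bc cd] /and3P[nac nbd nad]]]]]].
  move: Gs => /and4P[Ga Gb Gc Gd].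
  move: un; rewrite /= !inE !negb_or => /and4P[/and3P[nab nac0 nad0] /andP[nbc nbd0] ncd _].
  have i2 : forall u w, u \in G -> w \in G -> u != w -> ~~ pg_adj u w ->
       (#[u] == 2) || (#[w] == 2).
    move=> u w Gu Gw nuw; apply: contraR => /norP[ou ow].
    by rewrite ?negbK; apply: cl.
  have := i2 a c Ga Gc nac0 nac; have := i2 b d Gb Gd nbd0 nbd.
  have := i2 a d Ga Gd nad0 nad.
  have [oc|oc] := eqVneq #[c] 2.
    move=> _ /orP[/eqP ob|/eqP od] _.
      by move: bc; rewrite pg_adjC; apply/negP; rewrite invol_indep.
    by move: cd; apply/negP; rewrite invol_indep.
  move=> _ _; rewrite ?orbF => /eqP oa.
  have [ob|ob] := eqVneq #[b] 2.
    by move: ab; apply/negP; rewrite invol_indep.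
  move: (i2 b d Gb Gd nbd0 nbd); rewrite (negPf ob) /= => /eqP od.
  have [b1 | aB] := adj_invol oa ab.
    by move: nbd; rewrite b1 adj1 // -order_eq1 od.
  have [c1 | dC] := adj_invol od (etrans (pg_adjC _ _) cd).
    by move: nac; rewrite c1 pg_adjC adj1 // -order_eq1 oa.
  have b1 : b != 1 by apply/eqP=> b1; move: nbd; rewrite b1 adj1 // -order_eq1 od.
  have c1 : c != 1 by apply/eqP=> c1; move: nac; rewrite c1 pg_adjC adj1 // -order_eq1 oa.
  case/orP: (ch b c Gb Gc (ord_gt2 b1 ob) (ord_gt2 c1 oc)) => [bC|cB].
    move: nac; rewrite /pg_adj nac0 /=; apply/negP/negPn.
    by rewrite (subsetP _ _ aB) // cycle_subG.
  move: nbd; rewrite /pg_adj nbd0 /=; apply/negP/negPn.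
  by rewrite (subsetP _ _ dC) ?orbT // cycle_subG.
- move=> [a [b [c [d [Gs un /and4P[ab bc cd da] /andP[nac nbd]]]]]].
  move: Gs => /and4P[Ga Gb Gc Gd].
  move: un; rewrite /= !inE !negb_or => /and4P[/and3P[nab nac0 nad0] /andP[nbc nbd0] ncd _].
  have i2 : forall u w, u \in G -> w \in G -> u != w -> ~~ pg_adj u w ->
       (#[u] == 2) || (#[w] == 2).
    move=> u w Gu Gw nuw; apply: contraR => /norP[ou ow].
    by rewrite ?negbK; apply: cl.
  have ni : forall u w, #[u] == 2 -> #[w] == 2 -> ~~ pg_adj u w.
    by move=> u w /eqP ? /eqP ?; apply: invol_indep.
  case/orP: (i2 a c Ga Gc nac0 nac) => oa; case/orP: (i2 b d Gb Gd nbd0 nbd) => ob.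
  + by move: ab; apply/negP; apply: ni.
  + by move: da; rewrite pg_adjC; apply/negP; apply: ni.
  + by move: bc; rewrite pg_adjC; apply/negP; apply: ni.
  + by move: cd; apply/negP; apply: ni.
Qed.

Lemma threshold_no2K2 : pg_threshold G -> ~ has_induced_2K2 G.
Proof. by case=> _ []. Qed.

End G.
End Part1.
Local Open Scope group_scope.
Lemma conj_inv_sq (gT : finGroupType) (x y : gT) : y ^+ 2 == 1 ->
  (x ^ y == x^-1) = ((x * y) ^+ 2 == 1).
Proof.
rewrite expgS expg1 -eq_invg_mul => /eqP yV.
by rewrite conjgE yV eq_sym eq_invg_mul expgS expg1 !mulgA.
Qed.

Lemma D_ours n : 1 < n ->
  'D_(n.*2) \isog Grp (a : b : (a ^+ n, b ^+ 2, (a * b) ^+ 2)).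
Proof.
move=> n1 gT G; rewrite (Grp_dihedral n1); apply/existsP/existsP=> [] [[x y]] /=;
  rewrite !xpair_eqE => /and4P[gE xn y2 r]; exists (x, y);
  rewrite /= !xpair_eqE gE xn y2 /=.
  by rewrite -conj_inv_sq.
by rewrite conj_inv_sq.
Qed.

Section Grp.
Variable gT : finGroupType.
Implicit Types (x y z g a b : gT).

Lemma le2_sq z : #[z] <= 2 -> z ^+ 2 = 1.
Proof.
move=> h; apply/eqP; rewrite -order_dvdn; move: (order_gt0 z) h.
by case: #[z] => [|[|[|k]]].
Qed.

Lemma sq_le2 z : z ^+ 2 = 1 -> #[z] <= 2.
Proof. by move/eqP; rewrite -order_dvdn => /(dvdn_leq (isT : 0 < 2)). Qed.

Lemma sq1_inv z : z ^+ 2 = 1 -> z^-1 = z.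
Proof. by move=> h; apply/eqP; rewrite eq_invg_mul -(expg1 z) -expgS h. Qed.

Lemma in_cycle_dvd g x y : x \in <[g]> -> y \in <[g]> -> #[x] %| #[y] ->
  x \in <[y]>.
Proof.
move=> xg yg d.
have := cardSg_cyclic (cycle_cyclic g) (H := <[x]>%G) (K := <[y]>%G).
by rewrite !cycle_subG xg yg d -cycle_subG => /(_ isT isT) <-.
Qed.

Lemma cyc_chain g m x y : #[g] %| m -> goodn m -> x \in <[g]> -> y \in <[g]> ->
  2 < #[x] -> 2 < #[y] -> (x \in <[y]>) || (y \in <[x]>).
Proof.
move=> gm gd xg yg ox oy.
have xm : #[x] %| m by apply: dvdn_trans gm; apply: order_dvdG.
have ym : #[y] %| m by apply: dvdn_trans gm; apply: order_dvdG.
case/orP: (good_dchain gd xm ym ox oy) => h.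
  by rewrite (in_cycle_dvd xg yg h).
by rewrite (in_cycle_dvd yg xg h) orbT.
Qed.
End Grp.

Section Class.
Variable gT : finGroupType.
Implicit Types (x y z g a b : gT).

Lemma dih_elems a b z : b ^+ 2 == 1 -> (a * b) ^+ 2 == 1 ->
  z \in <[a]> <*> <[b]> -> 2 < #[z] -> z \in <[a]>.
Proof.
move=> b2 ab2 zJ oz.
have aB : a ^ b = a^-1 by apply/eqP; rewrite conj_inv_sq.
have nab : <[b]> \subset 'N(<[a]>).
  by rewrite cycle_subG; apply/normP; rewrite -cycleJ aB cycleV.
move: zJ; rewrite (norm_joinEr nab) => /mulsgP[c d cA dB zE].
move: dB => /cycleP[j dE].
rewrite zE dE -(expg_mod _ (eqP b2)) modn2 in oz *.
move: oz; case: (odd j) => /= oz; last by rewrite expg0 mulg1.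
case/cycleP: cA => i cE; rewrite cE expg1 in oz *.
have : (a ^+ i * b) ^+ 2 == 1.
  by rewrite -conj_inv_sq // conjXg aB expVgn.
by move/eqP/sq_le2; rewrite leqNgt oz.
Qed.

Lemma class_chain (G : {group gT}) : power_graph_class G -> chainc G.
Proof.
have dih : forall m, goodn m -> dihedral_2m G m -> chainc G.
  move=> m gm [m0 /isoGrp_hom /existsP[[a b]]] /=.
  rewrite !xpair_eqE => /and4P[/eqP gE am b2 ab2] x y Gx Gy ox oy.
  rewrite -gE in Gx Gy.
  apply: (cyc_chain (g := a) (m := m)) => //; last first.
  - exact: dih_elems Gy oy.
  - exact: dih_elems Gx ox.
  by rewrite order_dvdn.
case=> [[cG [p [e [pp oG]]]] | [ab | [[k dk] | [p [pp po cl]]]]].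
- case/cyclicP: cG => g gE x y Gx Gy ox oy; rewrite gE in Gx Gy.
  apply: (cyc_chain (m := #|G|) _ _ Gx Gy ox oy); first by rewrite gE.
  by rewrite oG; left; exists p, e.
- move=> x y Gx Gy ox oy; exfalso.
  case/(abelemP (isT : prime 2)): ab => _ sq.
  have := sq_le2 (sq x Gx).
  by rewrite leqNgt ox.
- by apply: dih dk; left; exists 2, k.
case: cl => [[cG oG] | [n n0 dn] | dp].
- case/cyclicP: cG => g gE x y Gx Gy ox oy; rewrite gE in Gx Gy.
  apply: (cyc_chain (m := #|G|) _ _ Gx Gy ox oy); first by rewrite gE.
  by rewrite oG; right; exists p.
- by apply: dih dn; left; exists p, n.
- by apply: dih dp; right; exists p.
Qed.
End Class.

Section Classify.
Variable gT : finGroupType.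
Implicit Types (x y z g a b : gT).

Lemma mem_cycle_dvd x y : x \in <[y]> -> #[x] %| #[y].
Proof. exact: order_dvdG. Qed.

Lemma exp2_abelian (G : {group gT}) :
  (forall z, z \in G -> z ^+ 2 = 1) -> abelian G.
Proof.
move=> sq; apply/centsP => x Gx y Gy.
have xV := sq1_inv (sq x Gx); have yV := sq1_inv (sq y Gy).
have xyV := sq1_inv (sq _ (groupM Gx Gy)).
by rewrite /commute -{1}xyV invMg xV yV.
Qed.

Lemma chain_class (G : {group gT}) : chainc G -> power_graph_class G.
Proof.
move=> ch.
case: (boolP [exists z in G, 2 < #[z]]) => [/existsP[x0 /andP[Gx0 ox0]] | none];
  last first.
  have sq : forall z, z \in G -> z ^+ 2 = 1.
    move=> z Gz; apply: le2_sq; rewrite leqNgt; apply: contra none => oz.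
    by apply/existsP; exists z; rewrite Gz.
  right; left; apply/(abelemP (isT : prime 2)); split => //.
  exact: exp2_abelian.
case: (@arg_maxnP _ x0 (mem G) (fun z => #[z]) Gx0) => g Gg gmax.
have {}Gg : g \in G := Gg.
set n := #[g].
have n2 : 2 < n by apply: leq_trans ox0 (gmax _ Gx0).
have n1 : 1 < n by apply: ltnW.
have inC : forall y, y \in G -> 2 < #[y] -> y \in <[g]>.
  move=> y Gy oy; case/orP: (ch y g Gy Gg oy n2) => // gy.
  have sgy : <[g]> \subset <[y]> by rewrite cycle_subG.
  have : <[g]> == <[y]> by rewrite eqEcard sgy /=; apply: gmax.
  by move/eqP->; rewrite cycle_id.
have dch : dchain n.
  move=> d e dn en d2 e2.
  have od : #[g ^+ (n %/ d)] = d.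
    by rewrite orderXdiv ?dvdn_div // divnA // mulKn // (leq_trans _ d2).
  have oe : #[g ^+ (n %/ e)] = e.
    by rewrite orderXdiv ?dvdn_div // divnA // mulKn // (leq_trans _ e2).
  have G1 : g ^+ (n %/ d) \in G by rewrite groupX.
  have G2 : g ^+ (n %/ e) \in G by rewrite groupX.
  have := ch _ _ G1 G2; rewrite od oe => /(_ d2 e2) /orP[h|h].
    by have := mem_cycle_dvd h; rewrite od oe => ->.
  by have := mem_cycle_dvd h; rewrite od oe => ->; rewrite orbT.
have gn := dchain_good (ltnW n1) dch.
have [sG | /subsetPn[x Gx nx]] := boolP (G \subset <[g]>).
  have GE : G :=: <[g]> by apply/eqP; rewrite eqEsubset sG cycle_subG Gg.
  have cG : cyclic G by apply/cyclicP; exists g.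
  have oG : #|G| = n by rewrite GE.
  case: gn => [[p [e [pp nE]]] | [p [pp po nE]]].
    by left; split => //; exists p, e; rewrite oG.
  by right; right; right; exists p; split => //; apply: Or31; split => //; rewrite oG.
have out : forall z, z \in G -> z \notin <[g]> -> z ^+ 2 = 1.
  move=> z Gz nz; apply: le2_sq; rewrite leqNgt; apply: contra nz; exact: inC.
have inv : forall z, z \in G -> z \notin <[g]> -> g ^ z = g^-1.
  move=> z Gz nz; apply/eqP; rewrite conj_inv_sq ?(out z Gz nz) //.
  apply/eqP/out; first by rewrite groupM.
  apply: contra nz => gz.
  have : g^-1 * (g * z) \in <[g]> by rewrite groupM ?groupV ?cycle_id.
  by rewrite mulKg.
have x2 := out x Gx nx.
have sqm : forall z, z ^+ 2 = z * z by move=> z; rewrite expgS expg1.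
have g2 : g^-1 != g.
  rewrite eq_invg_mul -sqm; apply/negP => /eqP/sq_le2.
  by rewrite leqNgt n2.
have xy : forall y, y \in G -> y \notin <[g]> -> x * y \in <[g]>.
  move=> y Gy ny; case: (boolP (x * y \in <[g]>)) => // nxy; exfalso.
  move/negP: g2; apply; apply/eqP.
  have := inv _ (groupM Gx Gy) nxy.
  by rewrite conjgM (inv x Gx nx) conjVg (inv y Gy ny) invgK => /esym.
have xx : x * x = 1 by rewrite -sqm.
have gE : <[g]> <*> <[x]> = G.
  apply/eqP; rewrite eqEsubset join_subG !cycle_subG Gg Gx /=.
  apply/subsetP => y Gy; case: (boolP (y \in <[g]>)) => yg.
    by rewrite mem_gen // inE yg.
  have -> : y = x * (x * y) by rewrite mulgA xx mul1g.
  by rewrite groupM // mem_gen // inE ?cycle_id ?orbT ?(xy y Gy yg).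
have GU : G :=: <[g]> :|: x *: <[g]>.
  apply/eqP; rewrite eqEsubset; apply/andP; split; apply/subsetP => y.
    move=> Gy; rewrite inE; case: (boolP (y \in <[g]>)) => //= yg.
    by rewrite mem_lcoset (sq1_inv x2); apply: xy.
  rewrite inE => /orP[yg | ]; first by apply: (subsetP _ _ yg); rewrite cycle_subG.
  rewrite mem_lcoset => h; have -> : y = x * (x^-1 * y) by rewrite mulKVg.
  by rewrite groupM // (subsetP _ _ h) // cycle_subG.
have I0 : <[g]> :&: x *: <[g]> = set0.
  apply/setP => y; rewrite !inE mem_lcoset.
  apply/negbTE/andP => [[yg h]].
  have : (x^-1 * y) * y^-1 \in <[g]> by rewrite groupM ?groupV.
  by rewrite mulgK groupV => /(negP nx).
have oG : #|G| = n.*2.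
  by rewrite GU cardsU I0 cards0 subn0 card_lcoset addnn.
have isoGD : G \isog 'D_(n.*2).
  apply/(isoGrpP _ (Grp_dihedral n1)); split; first by rewrite card_dihedral.
  apply/existsP; exists (g, x).
  by rewrite /= !xpair_eqE gE eqxx expg_order x2 eqxx (inv x Gx nx) eqxx.
have dih : forall m, m = n -> dihedral_2m G m.
  move=> m ->; split; first exact: ltnW.
  exact: isoGrp_trans isoGD (D_ours n1).
case: gn => [[p [e [pp nE]]] | [p [pp po nE]]].
  have [p2|p2] := eqVneq p 2.
    by right; right; left; exists e; apply: dih; rewrite nE p2.
  right; right; right; exists p; split => //.
    by apply: contraT => /(prime_oddPn pp) E; rewrite E eqxx in p2.
  apply: Or32; exists e; last by apply: dih.
  by case: e nE => // nE; move: n2; rewrite nE expn0.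
right; right; right; exists p; split => //.
by apply: Or33; apply: dih.
Qed.
End Classify.

Theorem mainTheorem13 (gT : finGroupType) (G : {group gT}) :
  [/\ (pg_threshold G <-> pg_split G),
      (pg_split G <-> ~ has_induced_2K2 G),
      (~ has_induced_2K2 G <-> intersection_condition G) &
      (intersection_condition G <-> power_graph_class G)].
Proof.
split.
- split => h.
    by apply: chain_split; apply: no2K2_chain; apply: threshold_no2K2.
  by apply: chain_threshold; apply: no2K2_chain; apply: split_no2K2.
- split; first exact: split_no2K2.
  by move/no2K2_chain; apply: chain_split.
- split => h.
    by apply/IC_chain; apply: no2K2_chain.
  by apply: split_no2K2; apply: chain_split; apply/IC_chain.
- split => h.
    by apply: chain_class; apply/IC_chain.
  by apply/IC_chain; apply: class_chain.
Qed.
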